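(* Let $n\ge 3$, $4\le m<\infty$, $I=\{1,\dots,n\}$, $\Gamma$ an $n$-dimensional vector space over a countably infinite skew field, and $\Delta_0=(V,\tau,* )$ as below. Let $\Delta=(W,\tau,* )$ be a geometry over $I$ containing $\Delta_0$ as an induced subgeometry and satisfying Properties (F), (I), (V), (P), (H), (C). Let $z$ be an element of type $n-2$ and let $x,y$ be elements of types in $\{n-1,n\}$ incident with $z$, of the same type if $m$ is odd and of different types if $m$ is even, at distance at least $m+1$ (possibly infinite) in the incidence graph of the rank 2 geometry of elements of types $n-1,n$ incident with $z$. Construct $\Delta'=(W',\tau,* )$ as follows. Consider a path $\gamma=(x_0:=x,x_1,\dots,x_{m-2},x_{m-1}:=y)$ with types alternating between $n-1$ and $n$. If $x$ has type $n$, $x_1$ is taken to be an existing element of type $n-1$ incident with $x$ and $z$ such that $x$ is the only type-$n$ element incident with $x_1$ (such an element exists); similarly, if $y$ has type $n$, $x_{m-2}$ is an existing element of type $n-1$ incident with $y$ and $z$ such that $y$ is the only type-$n$ element incident with it. All other inner vertices of $\gamma$ are new elements. To each new element of type $n-1$ on $\gamma$ assign a precursor: an element of type $n-1$ of $\Delta_0$ incident with $z$, chosen so that the type-$(n-1)$ elements of $\gamma$ have pairwise distinct precursors. A new type-$(n-1)$ element of $\gamma$ is incident exactly with its neighbours on $\gamma$ and with the elements of type $\le n-2$ incident with its precursor. Further, for each new element $x_i$ of type $n$ on $\gamma$ and each element $a$ of type $n-1$ of $\Delta_0$ that is not the precursor of $x_{i-1}$ or $x_{i+1}$, add a new element of type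 $n-1$ with precursor $a$, incident exactly with $x_i$ and with the elements of type $\le n-2$ incident with $a$. Each new element of type $n$ is incident exactly with its neighbours on $\gamma$, all elements of type $\le n-2$, and the new type-$(n-1)$ elements attached to it in the previous sentence. Incidences among elements of $W$ are unchanged. Then $\Delta'$ satisfies Properties (F), (I), (V), (P), (H), (C).
   Context: A geometry over $I$ is a triple $(V,\tau,* )$ with $\tau:V\to I$ and $*$ a symmetric relation such that elements of equal type are incident iff equal. A rank 2 geometry (bipartite incidence graph) is without $k$-gons if it has no cycle of length $2k$. $\Delta_0=(V,\tau,* )$ is the geometry over $I$ whose elements of type $i<n$ are the $i$-dimensional subspaces of $\Gamma$, with no elements of type $n$, two elements being incident iff one subspace contains the other. Properties of $\Delta=(W,\tau,* )\supseteq\Delta_0$: (F) Elements of types $i$ and $n$ with $i\le n-2$ are always incident. (I) There are finitely many elements of type $n$, and $W$ is countable. (V) Every element of $W\setminus V$ has type $n-1$ or $n$. (P) For every element $z$ of type $n-2$, the elements of types $n-1$ and $n$ incident with $z$ form a rank 2 geometry without $k$-gons for all $k<m$. (H) For every element $x$ of type $n-1$, there is an element $y$ of type $n-1$ of $\Delta_0$ (the precursor of $x$) such that $x$ and $y$ are incident with exactly the same elements of types $1,\dots,n-2$. (C) For every element $x$ of type $n$ and every element $y$ of type $n-1$ of $\Delta_0$, there is a unique element of type $n-1$ with precursor $y$ incident with $x$. *)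

(* Defs.v *)
From HB Require Import structures.
From mathcomp Require Import all_boot all_order all_algebra.
From Stdlib Require Import List.
Set Implicit Arguments. Unset Strict Implicit. Unset Printing Implicit Defensive.
Import GRing.Theory.
Local Open Scope ring_scope.

(* Gamma = R^n (row vectors), R a skew field; left scalars act by c *m B. *)

Definition is_subsp_dim (R : unitRingType) (n i : nat) (S : 'rV[R]_n -> Prop) :=
  exists B : 'M[R]_(i, n),
    (forall c : 'rV[R]_i, c *m B = 0 -> c = 0) /\
    (forall v, S v <-> exists c : 'rV[R]_i, v = c *m B).

(* Elements of Delta_0: i-dimensional subspaces with 1 <= i < n; the type is sdim. *)
Record Subsp (R : unitRingType) (n : nat) := MkSub {
  sdim : nat;
  sset : 'rV[R]_n -> Prop;
  sdim_ok : (0 < sdim < n)%N;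
  sset_ok : @is_subsp_dim R n sdim sset }.

Definition Sinc (R : unitRingType) (n : nat) (A B : Subsp R n) :=
  (forall v, sset A v -> sset B v) \/ (forall v, sset B v -> sset A v).

Local Close Scope ring_scope.

Section Geom.
Variables (R : unitRingType) (n : nat).
Local Notation V := (Subsp R n).
Variables (W : Type) (tau : W -> nat) (inc : W -> W -> Prop) (emb : V -> W).

Definition is_geometry :=
  (forall a b, inc a b -> inc b a) /\
  (forall a, 1 <= tau a <= n) /\
  (forall a b, tau a = tau b -> (inc a b <-> a = b)).

Definition induced_sub :=
  injective emb /\ (forall v, tau (emb v) = sdim v) /\
  (forall u v, inc (emb u) (emb v) <-> Sinc u v).

Definition propF := forall a b, tau a <= n - 2 -> tau b = n -> inc a b.

Definition propI :=
  (exists l : list W, forall w, tau w = n -> List.In w l) /\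
  (exists f : W -> nat, injective f).

Definition propV := forall w, (forall v, emb v <> w) -> tau w = n - 1 \/ tau w = n.

Definition res (z a : W) := (tau a = n - 1 \/ tau a = n) /\ inc a z.

Definition has_kgon (z : W) (k : nat) :=
  exists f : nat -> W,
    (forall i j, i < 2 * k -> j < 2 * k -> f i = f j -> i = j) /\
    (forall i, i < 2 * k -> res z (f i)) /\
    (forall i, i < 2 * k -> inc (f i) (f (i.+1 %% (2 * k)))).

Definition propP (m : nat) :=
  forall z, tau z = n - 2 -> forall k, 2 <= k < m -> ~ has_kgon z k.

Definition prec (x : W) (y : V) :=
  sdim y = n - 1 /\
  forall w, 1 <= tau w <= n - 2 -> (inc x w <-> inc (emb y) w).

Definition propH := forall x, tau x = n - 1 -> exists y, prec x y.

Definition propC :=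
  forall x, tau x = n -> forall y : V, sdim y = n - 1 ->
    exists! u, tau u = n - 1 /\ prec u y /\ inc x u.

Definition props (m : nat) := propF /\ propI /\ propV /\ propP m /\ propH /\ propC.

Definition res_path (z : W) (l : nat) (a b : W) :=
  exists f : nat -> W, f 0 = a /\ f l = b /\
    (forall i, i <= l -> res z (f i)) /\
    (forall i, i < l -> inc (f i) (f i.+1)).

Definition dist_ge (z : W) (d : nat) (a b : W) :=
  forall l, l < d -> ~ res_path z l a b.

End Geom.

Inductive raw (W V : Type) :=
| Old of W
| PNew of nat         (* the new inner vertex x_i of the path gamma *)
| Att of nat & V.     (* the new type n-1 element attached to x_i with precursor a *)
Arguments Old {W V}. Arguments PNew {W V}. Arguments Att {W V}.

Section Construction.
Variables (R : unitRingType) (n m : nat).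
Local Notation V := (Subsp R n).
Variables (W : Type) (tau : W -> nat) (inc : W -> W -> Prop) (emb : V -> W).
(* z, the endpoints x, y, the existing elements x1e (used as x_1 when
   tau x = n) and xm2e (used as x_{m-2} when tau y = n), and the precursor
   assignment pc : positions on gamma -> type n-1 elements of Delta_0. *)
Variables (z x y x1e xm2e : W) (pc : nat -> V).

Definition ptyp (i : nat) := if odd i then (if tau x == n then n - 1 else n) else tau x.

Definition isNew (i : nat) :=
  [/\ 1 <= i, i <= m - 2, ~ (i = 1 /\ tau x = n) & ~ (i = m - 2 /\ tau y = n)].

Definition rv (i : nat) : raw W V :=
  if i == 0 then Old x
  else if i == m - 1 then Old y
  else if (i == 1) && (tau x == n) then Old x1e
  else if (i == m - 2) && (tau y == n) then Old xm2e
  else PNew i.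

Definition valid (r : raw W V) : Prop :=
  match r with
  | Old _ => True
  | PNew i => isNew i
  | Att i a => [/\ isNew i, ptyp i = n, sdim a = n - 1,
                  a <> pc i.-1 & a <> pc i.+1]
  end.

Definition tauR (r : raw W V) : nat :=
  match r with
  | Old w => tau w
  | PNew i => ptyp i
  | Att _ _ => n - 1
  end.

Definition baseR (r s : raw W V) : Prop :=
  match r with
  | Old a => exists b, s = Old b /\ inc a b
  | PNew i =>
      s = rv i.-1 \/ s = rv i.+1 \/
      (exists w, s = Old w /\ tau w <= n - 2 /\
                 (ptyp i = n \/ inc (emb (pc i)) w)) \/
      (ptyp i = n /\ exists a, s = Att i a)
  | Att i a =>
      s = PNew i \/ (exists w, s = Old w /\ tau w <= n - 2 /\ inc (emb a) w)
  end.

Definition incR (r s : raw W V) := r = s \/ baseR r s \/ baseR s r.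

Definition W' := {r : raw W V | valid r}.
Definition tau' (r : W') : nat := tauR (proj1_sig r).
Definition inc' (r s : W') : Prop := incR (proj1_sig r) (proj1_sig s).
Definition emb' (v : V) : W' := exist valid (Old (emb v)) I.

Definition choices_ok :=
  (tau x = n -> [/\ tau x1e = n - 1, inc x1e x, inc x1e z &
                 forall w, tau w = n -> inc x1e w -> w = x]) /\
  (tau y = n -> [/\ tau xm2e = n - 1, inc xm2e y, inc xm2e z &
                 forall w, tau w = n -> inc xm2e w -> w = y]) /\
  (forall i, i <= m - 1 -> ptyp i = n - 1 ->
     [/\ sdim (pc i) = n - 1, inc (emb (pc i)) z &
         forall w, rv i = Old w -> @prec R n W tau inc emb w (pc i)]) /\
  (forall i j, i <= m - 1 -> j <= m - 1 -> ptyp i = n - 1 -> ptyp j = n - 1 ->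
     pc i = pc j -> i = j).

End Construction.

(* Main.v *)
Require Import Defs.
From HB Require Import structures.
From mathcomp Require Import all_boot all_order all_algebra.
Require Import Defs.
From mathcomp Require Import zify.
From Stdlib Require Import Lia.
From Stdlib Require Import ClassicalEpsilon Classical FunctionalExtensionality PropExtensionality ProofIrrelevance.
Set Implicit Arguments. Unset Strict Implicit. Unset Printing Implicit Defensive.
Import GRing.Theory.
Local Open Scope ring_scope.

Section LA.
Variable R : unitRingType.
Hypothesis Rfield : forall a : R, a != 0 -> a \is a GRing.unit.

Lemma kernel (d : nat) : forall (J : seq nat) (C : nat -> nat -> R),
  uniq J -> (d < size J)%N ->
  exists c : nat -> R, (exists2 j, j \in J & c j != 0) /\
    forall k, (k < d)%N -> \sum_(j <- J) c j * C j k = 0.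
Proof.
elim: d => [|d IH] J C uJ sJ.
  case: J uJ sJ => [//|j0 J] _ _.
  by exists (fun _ => 1); split=> //; exists j0; rewrite ?inE ?eqxx ?oner_neq0.
case: (boolP (has (fun j => C j d != 0) J)) => [/hasP[j0 j0J Cj0]|hn].
  have uC := Rfield Cj0.
  set u := (C j0 d)^-1.
  pose C' j k := C j k - C j d * u * C j0 k.
  have [c' [[j1 jJ cj] Hc']] : exists c' : nat -> R, (exists2 j, j \in rem j0 J & c' j != 0) /\
    forall k, (k < d)%N -> \sum_(j <- rem j0 J) c' j * C' j k = 0.
    apply: IH; first exact: rem_uniq.
    by rewrite size_rem // -ltnS (ltn_predK sJ).
  pose S := \sum_(i <- rem j0 J) c' i * C i d.
  exists (fun j => if j == j0 then - (S * u) else c' j); split.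
    move: jJ; rewrite (mem_rem_uniq _ uJ) inE => /andP[jn jJ'].
    by exists j1 => //; rewrite (negbTE jn).
  move=> k kd.
  rewrite (perm_big _ (perm_to_rem j0J)) big_cons eqxx.
  rewrite (eq_big_seq (fun j => c' j * C j k)); last first.
    by move=> j; rewrite (mem_rem_uniq _ uJ) inE => /andP[/negbTE -> _].
  have E : \sum_(j <- rem j0 J) c' j * C j k =
     \sum_(j <- rem j0 J) c' j * C' j k + S * u * C j0 k.
    rewrite /S !big_distrl /= -big_split /=; apply: eq_bigr => j _.
    by rewrite /C' mulrBr !mulrA subrK.
  rewrite E.
  have -> : \sum_(j <- rem j0 J) c' j * C' j k = 0.
    move: kd; rewrite ltnS leq_eqVlt => /orP[/eqP ->|kd]; last exact: Hc'.
    apply: big1 => j _.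
    by rewrite /C' -[_ * u * _]mulrA /u (mulVr uC) mulr1 subrr mulr0.
  by rewrite /= add0r mulNr addNr.
have [c [cj Hc]] := IH J C uJ (ltnW sJ).
exists c; split=> // k; rewrite ltnS leq_eqVlt => /orP[/eqP ->|kd]; last exact: Hc.
apply: big1_seq => j /= jJ.
have : ~~ (C j d != 0) by apply: contra hn => H; apply/hasP; exists j.
by rewrite negbK => /eqP ->; rewrite mulr0.
Qed.

Definition mxn a b (M : 'M[R]_(a,b)) (i j : nat) : R :=
  match (insub i : option 'I_a), (insub j : option 'I_b) with
  | Some i', Some j' => M i' j' | _, _ => 0 end.

Lemma mxnE a b (M : 'M[R]_(a,b)) (i : 'I_a) (j : 'I_b) : mxn M i j = M i j.
Proof. by rewrite /mxn !valK. Qed.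

Lemma dep_rows d e n (B : 'M[R]_(e,n)) (A : 'M[R]_(d,n)) : (d < e)%N ->
  (forall j : 'I_e, exists c : 'rV_d, row j B = c *m A) ->
  exists c : 'rV_e, c != 0 /\ c *m B = 0.
Proof.
move=> de H.
pose Cf j := proj1_sig (constructive_indefinite_description _ (H j)).
have HC j : row j B = Cf j *m A := proj2_sig (constructive_indefinite_description _ (H j)).
pose M : 'M_(e,d) := \matrix_(j,k) Cf j 0 k.
have := @kernel d (iota 0 e) (mxn M) (iota_uniq 0 e); rewrite size_iota => /(_ de) [c [[j0 jJ cj] Hc]].
exists (\row_(j < e) c j); split.
  apply/eqP => h; move: jJ; rewrite mem_iota add0n => je.
  have := congr1 (fun M : 'rV_e => M 0 (Ordinal je)) h; rewrite !mxE /= => cj0.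
  by rewrite cj0 eqxx in cj.
apply/rowP => l; rewrite !mxE.
have E j : B j l = \sum_k Cf j 0 k * A k l.
  by have := congr1 (fun M : 'rV_n => M 0 l) (HC j); rewrite !mxE.
under eq_bigr => j _ do rewrite mxE E big_distrr /=.
rewrite exchange_big /=; apply: big1 => k _.
under eq_bigr => i _ do rewrite mulrA.
rewrite -big_distrl /=.
have -> : \sum_(i < e) c i * Cf i 0 k = 0.
  rewrite -[RHS](Hc k (ltn_ord k)) (_ : iota 0 e = index_iota 0 e); last by rewrite /index_iota subn0.
  rewrite big_mkord; apply: eq_bigr => i _.
  by rewrite mxnE mxE.
by rewrite mul0r.
Qed.
End LA.
Section LA2.
Variable R : unitRingType.
Hypothesis Rfield : forall a : R, a != 0 -> a \is a GRing.unit.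
Variable n : nat.

Definition indep d (B : 'M[R]_(d,n)) := forall c : 'rV[R]_d, c *m B = 0 -> c = 0.

Lemma dim_le d e (S T : 'rV[R]_n -> Prop) : is_subsp_dim d S -> is_subsp_dim e T ->
  (forall v, T v -> S v) -> (e <= d)%N.
Proof.
move=> [BS [iS hS]] [BT [iT hT]] TS.
rewrite leqNgt; apply/negP => de.
have [c [cn cB]] : exists c : 'rV_e, c != 0 /\ c *m BT = 0.
  apply: (dep_rows Rfield de (A := BS)) => j.
  have : T (row j BT) by apply/hT; exists (delta_mx 0 j); rewrite rowE.
  by move/TS/hS.
by move/eqP: cn; apply; apply: iT.
Qed.

Lemma ext_indep d (B : 'M[R]_(d,n)) (v : 'rV[R]_n) : indep B ->
  ~ (exists c, v = c *m B) -> indep (col_mx B v).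
Proof.
move=> iB nv c.
rewrite -[c]hsubmxK mul_row_col.
set c1 := lsubmx c; set c2 := rsubmx c.
rewrite [c2]mx11_scalar mul_scalar_mx => h.
case: (eqVneq (c2 0 0) 0) => [t0|tn].
  move: h; rewrite t0 scale0r addr0 => /iB ->.
  by rewrite raddf0 row_mx0.
exfalso; apply: nv; exists (- ((c2 0 0)^-1 *: c1)).
have tu := Rfield tn.
have h' : c2 0 0 *: v = - (c1 *m B) by apply/eqP; rewrite -addr_eq0 addrC h.
by rewrite mulNmx -scalemxAl -scalerN -h' scalerA (mulVr tu) scale1r.
Qed.

Lemma line_subsp (v : 'rV[R]_n) : v != 0 ->
  is_subsp_dim 1 (fun u => exists c : 'rV[R]_1, u = c *m v).
Proof.
move=> vn; exists v; split=> // c h.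
case: (pickP (fun l => v 0 l != 0)) => [l vl|hv]; last first.
  by case/eqP: vn; apply/rowP => l; rewrite mxE; move/negbFE/eqP: (hv l).
move: h; rewrite [c]mx11_scalar mul_scalar_mx => /rowP /(_ l); rewrite !mxE => h.
have -> : c 0 0 = 0 by rewrite -(mulrK (Rfield vl) (c 0 0)) h mul0r.
by rewrite raddf0.
Qed.

Lemma subsp_eq (a b : Subsp R n) : sdim a = sdim b ->
  (forall v, sset a v <-> sset b v) -> a = b.
Proof.
case: a => da sa oka pa; case: b => db sb okb pb /= eD eS; subst db.
have E : sa = sb by apply: functional_extensionality => v; apply: propositional_extensionality.
subst sb; f_equal; apply: proof_irrelevance.
Qed.

Lemma sinc_lt (a b : Subsp R n) : (sdim a < sdim b)%N -> Sinc a b ->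
  forall v, sset a v -> sset b v.
Proof.
move=> lt [//|H]; exfalso.
have := dim_le (sset_ok a) (sset_ok b) H.
by rewrite leqNgt lt.
Qed.

Lemma sp_add (p : Subsp R n) a b : sset p a -> sset p b -> sset p (a + b).
Proof.
case: (sset_ok p) => B [_ h] /h[c1 ->] /h[c2 ->]; apply/h.
by exists (c1 + c2); rewrite mulmxDl.
Qed.

Lemma sp_scale (p : Subsp R n) a t : sset p a -> sset p (t *: a).
Proof.
case: (sset_ok p) => B [_ h] /h[c1 ->]; apply/h.
by exists (t *: c1); rewrite scalemxAl.
Qed.

Lemma sp_zero (p : Subsp R n) : sset p 0.
Proof. case: (sset_ok p) => B [_ h]; apply/h; exists 0; by rewrite mul0mx. Qed.

Lemma colspan d (B : 'M[R]_(d,n)) v (c : 'rV[R]_(d + 1)) :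
  c *m col_mx B v = lsubmx c *m B + (rsubmx c 0 0) *: v.
Proof. by rewrite -{1}[c]hsubmxK mul_row_col {1}[rsubmx c]mx11_scalar mul_scalar_mx. Qed.

Hypothesis n3 : (3 <= n)%N.

Lemma hyp_eq (a b : Subsp R n) : sdim a = (n - 1)%N -> sdim b = (n - 1)%N ->
  (forall s, sdim s = 1%N -> (Sinc a s <-> Sinc b s)) -> a = b.
Proof.
suff H : forall a b : Subsp R n, sdim a = (n - 1)%N -> sdim b = (n - 1)%N ->
   (forall s, sdim s = 1%N -> Sinc a s -> Sinc b s) -> forall v, sset a v -> sset b v.
  move=> da db h; apply: subsp_eq; first by rewrite da db.
  by move=> v; split; apply: H => // s s1; case: (h s s1).
move=> {}a {}b da db h v av.
case: (eqVneq v 0) => [->|vn]; first exact: sp_zero.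
have ok1 : (0 < 1 < n)%N by apply/andP; split => //; apply: leq_trans n3.
pose L := MkSub ok1 (line_subsp vn).
have : Sinc b L.
  apply: h => //; right => u /= [c ->].
  case: (sset_ok a) => B [_ hB]; case/hB: av => c0 ->.
  by apply/hB; exists (c *m c0); rewrite mulmxA.
case=> [H|H]; last by apply: H; exists 1%:M; rewrite mul1mx.
have := dim_le (line_subsp vn) (sset_ok b) H.
rewrite db; move: n3; clear; lia.
Qed.

Lemma hyp_inter_sub (p q s s' : Subsp R n) :
  sdim p = (n - 1)%N -> sdim q = (n - 1)%N -> sdim s' = (n - 2)%N ->
  (forall v, sset s v -> sset p v) -> (forall v, sset s v -> sset q v) ->
  (forall v, sset s' v -> sset p v) -> (forall v, sset s' v -> sset q v) ->
  p <> q -> forall v, sset s v -> sset s' v.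
Proof.
move=> dp dq ds sp sq s'p s'q pq v sv; apply: NNPP => nv.
case: (sset_ok s') => Bs [iBs hs].
have iU : indep (col_mx Bs v).
  by apply: ext_indep => // -[c e]; apply: nv; apply/hs; exists c.
have UP : forall P : Subsp R n, sdim P = (n - 1)%N -> (forall w, sset s' w -> sset P w) ->
    sset P v -> forall w, sset P w <-> exists c, w = c *m col_mx Bs v.
  move=> P dP s'P vP w; split; last first.
    move=> [c ->]; rewrite colspan; apply: sp_add; last exact: sp_scale.
    by apply: s'P; apply/hs; exists (lsubmx c).
  move=> wP; apply: NNPP => nw.
  have iU' := ext_indep iU nw.
  have : is_subsp_dim (sdim s' + 1 + 1) (fun u => exists c, u = c *m col_mx (col_mx Bs v) w).
    by exists (col_mx (col_mx Bs v) w).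
  move=> H; have := dim_le (sset_ok P) H.
  have : forall u, (exists c, u = c *m col_mx (col_mx Bs v) w) -> sset P u.
    move=> u [c ->]; rewrite colspan; apply: sp_add; last exact: sp_scale.
    rewrite colspan; apply: sp_add; last exact: sp_scale.
    by apply: s'P; apply/hs; exists (lsubmx (lsubmx c)).
  move=> hh /(_ hh); rewrite dP ds; move: n3; clear; lia.
have Ep := UP p dp s'p (sp v sv).
have Eq := UP q dq s'q (sq v sv).
apply: pq; apply: subsp_eq; first by rewrite dp dq.
by move=> w; rewrite Ep Eq.
Qed.

Lemma hyp_inter (p q s s' : Subsp R n) :
  sdim p = (n - 1)%N -> sdim q = (n - 1)%N -> sdim s = (n - 2)%N -> sdim s' = (n - 2)%N ->
  (forall v, sset s v -> sset p v) -> (forall v, sset s v -> sset q v) ->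
  (forall v, sset s' v -> sset p v) -> (forall v, sset s' v -> sset q v) ->
  p <> q -> s = s'.
Proof.
move=> dp dq ds ds' sp sq s'p s'q pq; apply: subsp_eq; first by rewrite ds ds'.
move=> v; split; first exact: (hyp_inter_sub dp dq ds').
exact: (hyp_inter_sub dp dq ds).
Qed.
End LA2.

Local Close Scope ring_scope.

Section Main.
Variables (R : unitRingType) (n m : nat) (W : Type) (tau : W -> nat)
  (inc : W -> W -> Prop) (emb : Subsp R n -> W) (z x y x1e xm2e : W) (pc : nat -> Subsp R n).
Local Notation V := (Subsp R n).
Local Notation RW := (raw W V).
Local Notation rvv := (@rv R n m W tau x y x1e xm2e).
Local Notation ptypv := (@ptyp n W tau x).
Local Notation isNewv := (@isNew n m W tau x y).
Local Notation validv := (@valid R n m W tau x y pc).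
Local Notation tauRv := (@tauR R n W tau x).
Local Notation baseRv := (@baseR R n m W tau inc emb x y x1e xm2e pc).
Local Notation incRv := (@incR R n m W tau inc emb x y x1e xm2e pc).
Local Notation W2 := (@W' R n m W tau x y pc).
Local Notation tau2 := (@tau' R n m W tau x y pc).
Local Notation inc2 := (@inc' R n m W tau inc emb x y x1e xm2e pc).
Local Notation emb2 := (@emb' R n m W tau emb x y pc).

Hypothesis n3 : 3 <= n.
Hypothesis m4 : 4 <= m.
Hypothesis Rfield : forall a : R, (a != 0)%R -> a \is a GRing.unit.
Hypothesis Hgeo : @is_geometry n W tau inc.
Hypothesis Hind : @induced_sub R n W tau inc emb.
Hypothesis Hprops : @props R n W tau inc emb m.
Hypothesis tz : tau z = n - 2.
Hypothesis tx : tau x = n - 1 \/ tau x = n.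
Hypothesis ty : tau y = n - 1 \/ tau y = n.
Hypothesis xz : inc x z.
Hypothesis yz : inc y z.
Hypothesis Hpar : if odd m then tau x = tau y else tau x <> tau y.
Hypothesis Hdist : @dist_ge n W tau inc z m.+1 x y.
Hypothesis Hch : @choices_ok R n m W tau inc emb z x y x1e xm2e pc.

Lemma inc_sym a b : inc a b -> inc b a.
Proof. by case: Hgeo => h _; apply: h. Qed.
Lemma tau_rng a : 1 <= tau a <= n.
Proof. by case: Hgeo => _ [h _]. Qed.
Lemma inc_same a b : tau a = tau b -> (inc a b <-> a = b).
Proof. by case: Hgeo => _ [_ h]; apply: h. Qed.
Lemma inc_refl a : inc a a.
Proof. by apply/inc_same. Qed.

Definition al := if tau x == n then 1 else 0.
Definition be := if tau y == n then m - 2 else m - 1.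
Definition ox := if tau x == n then x1e else x.
Definition oy := if tau y == n then xm2e else y.

Lemma isNewE i : isNewv i <-> al < i < be.
Proof.
rewrite /isNew /al /be; case: (tau x =P n) => ex; case: (tau y =P n) => ey.
all: split => [[h1 h2 h3 h4]|/andP[h1 h2]]; [apply/andP; split|split]; lia.
Qed.

Lemma rv_new i : al < i < be -> rvv i = PNew i.
Proof.
rewrite /al /be => /andP[h1 h2].
have ? := m4; move: h1 h2; case: (tau x =P n) => ex; case: (tau y =P n) => ey => h1 h2.
all: rewrite /rv; case: ifP => [/eqP ?|_]; [lia|]; case: ifP => [/eqP ?|_]; [lia|].
all: case: ifP => [/andP[/eqP ? /eqP ?]|_]; [lia|]; case: ifP => [/andP[/eqP ? /eqP ?]|_]; [lia|]; done.
Qed.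

Lemma rv_al : rvv al = Old ox.
Proof.
have ? := m4; rewrite /rv /al /ox; case: (tau x =P n) => ex //=.
by case: ifP => [/eqP ?|_]; [lia|]; rewrite ?eqxx.
Qed.

Lemma rv_be : rvv be = Old oy.
Proof.
have ? := m4; rewrite /rv /be /oy; case: (tau y =P n) => ey /=; last first.
  by case: ifP => [/eqP ?|_]; [lia|]; rewrite ?eqxx.
case: ifP => [/eqP ?|_]; [lia|]; case: ifP => [/eqP ?|_]; [lia|].
case: ifP => [/andP[/eqP ? _]|_]; [lia|]; by rewrite ?eqxx.
Qed.

Lemma rv_PNew k i : rvv k = PNew i -> k = i.
Proof.
rewrite /rv; case: (k == 0) => //; case: (k == m - 1) => //.
case: (_ && _) => //; case: (_ && _) => //; by case.
Qed.

Lemma rv_notAtt k i a : rvv k <> Att i a.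
Proof.
rewrite /rv; case: (k == 0) => //; case: (k == m - 1) => //.
case: (_ && _) => //; case: (_ && _) => //.
Qed.

Lemma al_be : al + 1 < be.
Proof.
have ? := m4; rewrite /al /be; case: (tau x =P n) => ex; case: (tau y =P n) => ey; try lia.
move: Hpar; rewrite ex ey; case: ifP => om h; last by case: h.
have : m != 4 by apply: contraTneq om => ->.
move/eqP; lia.
Qed.

Lemma ptyp_rng i : ptypv i = n - 1 \/ ptypv i = n.
Proof. rewrite /ptyp; case: (odd i) => //; case: eqP => _; tauto. Qed.

Lemma ptypS i : (ptypv i = n - 1 /\ ptypv i.+1 = n) \/ (ptypv i = n /\ ptypv i.+1 = n - 1).
Proof.
have ? := n3; rewrite /ptyp /=; case: (odd i) => /=; case: (tau x =P n) => e; lia.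
Qed.

Lemma odd_m1 : odd (m - 1) = ~~ odd m.
Proof. case: (m) m4 => // k _; rewrite subn1 /=; by case: (odd k). Qed.
Lemma odd_m2 : odd (m - 2) = odd m.
Proof. have ? := m4; case: (m) m4 => // -[|k] //= _; by rewrite subSS subSS subn0 negbK. Qed.

Lemma Hch1 : tau x = n -> [/\ tau x1e = n - 1, inc x1e x, inc x1e z &
                 forall w, tau w = n -> inc x1e w -> w = x].
Proof. by case: Hch. Qed.
Lemma Hch2 : tau y = n -> [/\ tau xm2e = n - 1, inc xm2e y, inc xm2e z &
                 forall w, tau w = n -> inc xm2e w -> w = y].
Proof. by case: Hch => _ []. Qed.
Lemma Hch3 i : i <= m - 1 -> ptypv i = n - 1 ->
     [/\ sdim (pc i) = n - 1, inc (emb (pc i)) z &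
         forall w, rvv i = Old w -> @prec R n W tau inc emb w (pc i)].
Proof. by case: Hch => _ [] _ [] h _; apply: h. Qed.
Lemma Hch4 i j : i <= m - 1 -> j <= m - 1 -> ptypv i = n - 1 -> ptypv j = n - 1 ->
     pc i = pc j -> i = j.
Proof. by case: Hch => _ [] _ [] _ h; apply: h. Qed.

Lemma tau_rv i : i <= m - 1 -> tauRv (rvv i) = ptypv i.
Proof.
have ? := m4; have ? := n3; move=> im.
rewrite /rv; case: ifP => [/eqP ->|_]; first by rewrite /ptyp.
case: ifP => [/eqP ->|_].
  rewrite /ptyp odd_m1 /=; move: Hpar; case: (odd m) => /= h //.
  case: (tau x =P n) => e; case: tx; case: ty; lia.
case: ifP => [/andP[/eqP -> /eqP e]|_].
  by rewrite /ptyp /= e eqxx; case: (Hch1 e).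
case: ifP => [/andP[/eqP -> /eqP e]|_] //=.
rewrite /ptyp odd_m2; case: (Hch2 e) => -> _ _ _.
move: Hpar; case: (odd m) => h; case: (tau x =P n) => e2; lia.
Qed.

Lemma valid_rv i : i <= m - 1 -> validv (rvv i).
Proof.
have ? := m4; move=> im.
rewrite /rv; case: ifP => [_|/eqP h1] //; case: ifP => [_|/eqP h2] //.
case: ifP => [_|h3] //; case: ifP => [_|h4] //=.
split; try lia.
Qed.

Lemma tau_ox : tau ox = n - 1.
Proof. rewrite /ox; case: (tau x =P n) => e; [by case: (Hch1 e)|]; case: tx => //. Qed.
Lemma tau_oy : tau oy = n - 1.
Proof. rewrite /oy; case: (tau y =P n) => e; [by case: (Hch2 e)|]; case: ty => //. Qed.

Lemma be_m : be <= m - 1.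
Proof. rewrite /be; case: eqP => _; lia. Qed.

Lemma ptyp_al : ptypv al = n - 1.
Proof. have := al_be; have := be_m => ? ?. by rewrite -tau_rv ?rv_al /= ?tau_ox //; lia. Qed.
Lemma ptyp_be : ptypv be = n - 1.
Proof. by rewrite -tau_rv ?rv_be /= ?tau_oy // be_m. Qed.


Lemma incR_sym r s : incRv r s -> incRv s r.
Proof. rewrite /incR; case=> [->|[h|h]]; tauto. Qed.

Lemma incOO a b : incRv (Old a) (Old b) <-> inc a b.
Proof.
split; last by move=> h; right; left; exists b.
case=> [[->]|[[b' [[<-] h]]|[b' [[<-] h]]]]; [exact: inc_refl|done|exact: inc_sym].
Qed.

Lemma incOP w i : incRv (Old w) (PNew i) <-> baseRv (PNew i) (Old w).
Proof. split; [case=> [//|[[b [//]]|//]]|by move=> h; right; right]. Qed.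

Lemma incOA w i a : incRv (Old w) (Att i a) <-> tau w <= n - 2 /\ inc (emb a) w.
Proof.
split; last by case=> h1 h2; right; right; right; exists w.
case=> [//|[[b [//]]|[//|[w' [[<-] h]]]]]; tauto.
Qed.

Lemma incPO_low i w : al < i < be -> tau w <= n - 2 ->
  (incRv (PNew i) (Old w) <-> (ptypv i = n \/ inc (emb (pc i)) w)).
Proof.
move=> /andP[h1 h2] tw; have ? := n3; have ? := be_m.
have nrv k : k <= m - 1 -> Old w <> rvv k.
  move=> km e; have := tau_rv km; rewrite -e /= => e2.
  by case: (ptyp_rng k); lia.
split.
  case=> [//|[|[b [//]]]].
  case=> [/nrv|[/nrv|[[w' [[<-] [_ h]]]|[_ [a //]]]]]; [lia|lia|done].
move=> h; right; left; right; right; left; exists w; tauto.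
Qed.

Lemma sigE (a b : W2) : proj1_sig a = proj1_sig b -> a = b.
Proof.
case: a => a pa; case: b => b pb /= e; subst b; f_equal; apply: proof_irrelevance.
Qed.


Lemma tauR_hi r : validv r -> ~ (exists w, r = Old w) -> tauRv r = n - 1 \/ tauRv r = n.
Proof.
case: r => [w _ []|i _ _|i a _ _] /=; [by exists w|exact: ptyp_rng|by left].
Qed.

Lemma low_old (r : W2) : tau2 r <= n - 2 -> exists w, proj1_sig r = Old w.
Proof.
have ? := n3; case: r => r vr /= h; apply: NNPP => hn.
by case: (tauR_hi vr hn) => e; rewrite /tau' /= e in h; lia.
Qed.

Definition oW (w : W) : W2 := exist validv (Old w) I.

Local Notation prec2 := (@prec R n W2 tau2 inc2 emb2).

Lemma prec2E (r : W2) v : prec2 r v <-> sdim v = n - 1 /\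
  forall w, 1 <= tau w <= n - 2 -> (incRv (proj1_sig r) (Old w) <-> inc (emb v) w).
Proof.
split; case=> sv h; split=> // w tw.
  by have := h (oW w) tw; rewrite /inc' /= incOO.
have [w0 e] : exists w0, proj1_sig w = Old w0 by apply: low_old; case/andP: tw.
have tw0 : 1 <= tau w0 <= n - 2 by move: tw; rewrite /tau' e.
by rewrite /inc' e h // /emb' /= incOO.
Qed.

Lemma prec2_old (r : W2) u v : proj1_sig r = Old u -> (prec2 r v <-> @prec R n W tau inc emb u v).
Proof.
move=> e; rewrite prec2E e; split; case=> sv h; split=> // w tw.
  by rewrite -(incOO u w); apply: h.
by rewrite incOO; apply: h.
Qed.

Lemma prec2_PNew (r : W2) i : proj1_sig r = PNew i -> ptypv i = n - 1 -> prec2 r (pc i).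
Proof.
have ? := n3; have ? := be_m.
case: r => r vr /= e; subst r => pi.
have hi : al < i < be by apply/isNewE; exact: vr.
have im : i <= m - 1 by case/andP: hi; lia.
rewrite prec2E /=; split; first by case: (Hch3 im pi).
move=> w /andP[_ tw]; rewrite incPO_low //; split; [case=> // ?; lia | by right].
Qed.

Lemma prec2_Att (r : W2) i a : proj1_sig r = Att i a -> prec2 r a.
Proof.
case: r => r vr /= e; subst r.
have [_ _ sa _ _] := vr.
rewrite prec2E /=; split=> // w /andP[_ tw].
split; first by case=> [//|[[//|[w' [[<-] [_ ?]]]]|[b [//]]]].
by move=> h; right; left; right; exists w.
Qed.


Lemma Hind_inc u v : inc (emb u) (emb v) <-> Sinc u v.
Proof. by case: Hind => _ [_ h]. Qed.
Lemma Hind_tau v : tau (emb v) = sdim v.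
Proof. by case: Hind => _ [h _]. Qed.
Lemma Hind_inj : injective emb.
Proof. by case: Hind. Qed.

Lemma prec2_uniq (r : W2) v1 v2 : prec2 r v1 -> prec2 r v2 -> v1 = v2.
Proof.
rewrite !prec2E => -[s1 h1] [s2 h2].
apply: (hyp_eq Rfield n3) => // s ss.
have tw : 1 <= tau (emb s) <= n - 2 by rewrite Hind_tau ss; apply/andP; split => //; lia.
by rewrite -!Hind_inc -h1 // -h2.
Qed.

Lemma prec2_rv (r : W2) k : k <= m - 1 -> ptypv k = n - 1 -> proj1_sig r = rvv k -> prec2 r (pc k).
Proof.
move=> km pk; case E: (rvv k) => [w|i|i a] e.
- by rewrite (prec2_old _ e); case: (Hch3 km pk) => _ _; apply.
- by have := rv_PNew E => ?; subst i; apply: prec2_PNew.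
- by case: (rv_notAtt E).
Qed.

Lemma nbP i s : al < i < be -> validv s -> (tauRv s = n - 1 \/ tauRv s = n) ->
  incRv (PNew i) s -> s <> PNew i ->
  s = rvv i.-1 \/ s = rvv i.+1 \/ exists a, s = Att i a.
Proof.
have ? := n3; move=> hi vs ts; case=> [e|[h|h]] ne; first by case: ne.
  case: h => [->|[->|[[w [e [tw _]]]|[_ [a' ->]]]]]; [tauto|tauto| |by right; right; exists a'].
  by subst s; move: ts => /=; lia.
case: s vs ts h ne => [a|j|j a] vs ts h ne.
- by case: h => b [].
- have hj : al < j < be by apply/isNewE.
  case: h => [e|[e|[[w [//]]|[_ [a' //]]]]].
    have := rv_PNew (esym e) => ej.
    right; left; rewrite rv_new; last by move: hj; lia.
    by f_equal; move: hj; lia.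
  have := rv_PNew (esym e) => ej.
  left; rewrite rv_new; last by move: hj; lia.
  by f_equal; lia.
- case: h => [[<-]|[w [//]]]; by right; right; exists a.
Qed.

Lemma nbA i a s : validv s -> (tauRv s = n - 1 \/ tauRv s = n) ->
  incRv (Att i a) s -> s <> Att i a -> s = PNew i.
Proof.
have ? := n3; move=> vs ts; case=> [e|[h|h]] ne; first by case: ne.
  case: h => [//|[w [e [tw _]]]]; by subst s; move: ts => /=; lia.
case: s vs ts h ne => [b|j|j b] vs ts h ne.
- by case: h => b' [].
- case: h => [e|[e|[[w [//]]|[_ [a' [<- _]]]]]] //; by case: (rv_notAtt (esym e)).
- by case: h => [//|[w [//]]].
Qed.


Lemma HpF : @propF n W tau inc. Proof. by case: Hprops. Qed.
Lemma HpI : @propI n W tau. Proof. by case: Hprops => _ []. Qed.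
Lemma HpV : @propV R n W tau emb. Proof. by case: Hprops => _ [] _ []. Qed.
Lemma HpP : @propP n W tau inc m. Proof. by case: Hprops => _ [] _ [] _ []. Qed.
Lemma HpH : @propH R n W tau inc emb. Proof. by case: Hprops => _ [] _ [] _ [] _ []. Qed.
Lemma HpC : @propC R n W tau inc emb. Proof. by case: Hprops => _ [] _ [] _ [] _ []. Qed.

Lemma propF2 : @propF n W2 tau2 inc2.
Proof.
have ? := n3; move=> a b ha hb; have [w ea] := low_old ha.
rewrite /inc' ea; move: ha; rewrite /tau' ea /= => ha.
case: b hb => r vr; rewrite /tau' /=; case: r vr => [w'|i|i a'] vr /= hb.
- by apply/incOO; apply: HpF.
- apply/incOP; right; right; left; exists w; split=> //; split; [lia|by left].
- lia.
Qed.

Lemma propV2 : @propV R n W2 tau2 emb2.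
Proof.
move=> [r vr] hne; case: r vr hne => [w|i|i a] vr hne /=.
- case: (classic (exists v, emb v = w)) => [[v ev]|nv].
    by exfalso; apply: (hne v); apply: sigE; rewrite /= ev.
  by apply: HpV => v e; apply: nv; exists v.
- exact: ptyp_rng.
- by left.
Qed.

Lemma propH2 : @propH R n W2 tau2 inc2 emb2.
Proof.
move=> [r vr] /= hr; case: r vr hr => [w|i|i a] vr hr.
- have [v pv] := HpH hr; exists v; exact/(prec2_old (r := exist _ (Old w) vr)).
- by exists (pc i); apply: prec2_PNew.
- by exists a; apply: prec2_Att.
Qed.

Definition enc (r : RW) (f : W -> nat) : (nat + nat) + (nat * nat) :=
  match r with
  | Old w => inl (inl (f w))
  | PNew i => inl (inr i)
  | Att i a => inr (i, f (emb a))
  end.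

Lemma propI2 : @propI n W2 tau2.
Proof.
case: HpI => [[l hl] [f fi]]; split.
  pose g (i : nat) : list W2 := match excluded_middle_informative (validv (PNew i)) with
     | left p => cons (exist _ (PNew i) p) nil | right _ => nil end.
  exists (List.map oW l ++ List.flat_map g (List.seq 0 m))%list => -[r vr].
  rewrite /tau'; case: r vr => [w|i|i a] vr /= hw; apply: List.in_or_app.
  - left; have -> : exist validv (Old w) vr = oW w by apply: sigE.
    by apply: List.in_map; apply: hl.
  - right; apply/List.in_flat_map; exists i; split.
      apply/List.in_seq; have := be_m; have : al < i < be by apply/isNewE.
      lia.
    rewrite /g; case: excluded_middle_informative => [p|np]; last by case: np.
    by left; apply: sigE.
  - have ? := n3; lia.
exists (fun r : W2 => pickle (enc (proj1_sig r) f)) => a b /(pcan_inj pickleK) e.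
apply: sigE; move: e; case: (proj1_sig a) => [w|i|i u]; case: (proj1_sig b) => [w'|i'|i' u'] //=.
- by case=> /fi ->.
- by case=> ->.
- by case=> -> /fi /Hind_inj ->.
Qed.


Definition rvW k (hk : k <= m - 1) : W2 := exist _ (rvv k) (valid_rv hk).

Lemma candP i (u : W2) y' (p : validv (PNew i)) : ptypv i = n ->
  tau2 u = n - 1 -> prec2 u y' -> inc2 (exist validv (PNew i) p) u ->
  (proj1_sig u = rvv i.-1 /\ y' = pc i.-1) \/ (proj1_sig u = rvv i.+1 /\ y' = pc i.+1) \/
  proj1_sig u = Att i y'.
Proof.
have ? := n3; have ? := be_m.
have hi : al < i < be by apply/isNewE; exact: p.
move=> pi tu pu; rewrite /inc' /=.
case: u tu pu => r vr /= tu pu h.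
have pS := ptypS i; have pP := ptypS i.-1.
have ei : i.-1.+1 = i by case/andP: hi; lia.
rewrite ei in pP.
have ne : r <> PNew i by move=> e; move: tu; rewrite /tau' /= e /=; lia.
case: (nbP hi vr (or_introl tu) h ne) => [e|[e|[a e]]].
- left; split=> //; apply: (prec2_uniq pu); apply: (prec2_rv (r := exist _ r vr)); [lia|lia|exact: e].
- right; left; split=> //; apply: (prec2_uniq pu); apply: (prec2_rv (r := exist _ r vr)); [lia|lia|exact: e].
- right; right; rewrite e; congr Att; apply: esym; apply: (prec2_uniq pu).
  exact: (prec2_Att (r := exist _ r vr) e).
Qed.


Lemma propC2 : @propC R n W2 tau2 inc2 emb2.
Proof.
have ? := n3; have ? := be_m.
move=> [r vr] /= hx y' sy; case: r vr hx => [w|i|i a] vr hx.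
-
  have [u [[tu [pu iu]] uu]] := HpC hx sy.
  exists (oW u); split.
    split=> //; split; first exact/(prec2_old (r := oW u)).
    by rewrite /inc' /= incOO.
  move=> [r' vr'] [t' [p' i']]; apply: sigE => /=.
  move: i'; rewrite /inc' /=.
  case: r' vr' t' p' => [u'|j|j a] vr' t' p' i'.
  + congr Old; apply: uu; split=> //; split; first exact/(prec2_old (r := exist _ (Old u') vr')).
    exact/incOO.
  + exfalso; have hj : al < j < be by apply/isNewE.
    move: t'; rewrite /tau' /= => t'.
    have pS := ptypS j; have pP := ptypS j.-1.
    have ej : j.-1.+1 = j by case/andP: hj; lia.
    rewrite ej in pP.
    move/incOP: i' => [e|[e|[[w' [e [tw _]]]|[_ [a' //]]]]].
    * have : rvv j.-1 = PNew j.-1.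
        apply: rv_new; apply/andP; split; last by case/andP: hj; lia.
        case/andP: hj => h1 _; rewrite ltn_neqAle; apply/andP; split; last by lia.
        apply/eqP => ea; have := ptyp_al; rewrite ea; lia.
      by rewrite -e.
    * have : rvv j.+1 = PNew j.+1.
        apply: rv_new; apply/andP; split; first by case/andP: hj; lia.
        case/andP: hj => _ h2; rewrite ltn_neqAle; apply/andP; split; last by lia.
        apply/eqP => ea; have := ptyp_be; rewrite -ea; lia.
      by rewrite -e.
    * case: e => ew; subst w'; move: hx; rewrite /tau' /=; lia.
  + by exfalso; move/incOA: i' => [tw _]; move: hx; rewrite /tau' /=; lia.
-
  have pi : ptypv i = n by [].
  have hi : al < i < be by apply/isNewE.
  have same : forall u1 u2 : W2,
      (tau2 u1 = n - 1 /\ prec2 u1 y' /\ inc2 (exist validv (PNew i) vr) u1) ->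
      (tau2 u2 = n - 1 /\ prec2 u2 y' /\ inc2 (exist validv (PNew i) vr) u2) -> u1 = u2.
    move=> u1 u2 [t1 [p1 i1]] [t2 [p2 i2]]; apply: sigE.
    have c1 := candP pi t1 p1 i1; have c2 := candP pi t2 p2 i2.
    have nij : i.-1 <> i.+1 by case/andP: hi; lia.
    have pS := ptypS i; have pP := ptypS i.-1.
    have ei : i.-1.+1 = i by case/andP: hi; lia.
    rewrite ei in pP.
    have dif : pc i.-1 <> pc i.+1.
      by move=> e; apply: nij; apply: (Hch4 _ _ _ _ e); lia.
    have av (u : W2) : proj1_sig u = Att i y' -> y' <> pc i.-1 /\ y' <> pc i.+1.
      by case: u => r v /= e; rewrite e in v; case: v.
    case: c1 => [[e1 q1]|[[e1 q1]|e1]]; case: c2 => [[e2 q2]|[[e2 q2]|e2]];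
      rewrite ?e1 ?e2 //.
    + by case: dif; rewrite -q1 -q2.
    + by have [] := av _ e2.
    + by case: dif; rewrite -q1 -q2.
    + by have [] := av _ e2.
    + by have [] := av _ e1.
    + by have [] := av _ e1.
  have ei : i.-1.+1 = i by case/andP: hi; lia.
  have pS := ptypS i; have pP := ptypS i.-1; rewrite ei in pP.
  have incn k (hk : k <= m - 1) : k = i.-1 \/ k = i.+1 ->
      inc2 (exist validv (PNew i) vr) (rvW hk).
    by move=> hkk; rewrite /inc' /=; right; left; case: hkk => ->; [left|right; left].
  case: (classic (y' = pc i.-1)) => [ey|ny1].
    have hk : i.-1 <= m - 1 by lia.
    have P0 : tau2 (rvW hk) = n - 1 /\ prec2 (rvW hk) y' /\ inc2 (exist validv (PNew i) vr) (rvW hk).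
      split; first by rewrite /tau' /= tau_rv //; lia.
      split; last exact: (incn _ hk (or_introl erefl)).
      by rewrite ey; apply: (prec2_rv (r := rvW hk)) => //; lia.
    by exists (rvW hk); split=> // u Pu; exact: same P0 Pu.
  case: (classic (y' = pc i.+1)) => [ey|ny2].
    have hk : i.+1 <= m - 1 by case/andP: hi; lia.
    have P0 : tau2 (rvW hk) = n - 1 /\ prec2 (rvW hk) y' /\ inc2 (exist validv (PNew i) vr) (rvW hk).
      split; first by rewrite /tau' /= tau_rv //; lia.
      split; last exact: (incn _ hk (or_intror erefl)).
      by rewrite ey; apply: (prec2_rv (r := rvW hk)) => //; lia.
    by exists (rvW hk); split=> // u Pu; exact: same P0 Pu.
  have va : validv (Att i y') by split.
  have P0 : tau2 (exist _ (Att i y') va) = n - 1 /\ prec2 (exist _ (Att i y') va) y' /\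
     inc2 (exist validv (PNew i) vr) (exist _ (Att i y') va).
    split=> //; split; first exact: (prec2_Att (r := exist _ (Att i y') va)).
    by rewrite /inc' /=; right; left; right; right; right; split=> //; exists y'.
  by exists (exist _ (Att i y') va); split=> // u Pu; exact: same P0 Pu.
- by move: hx; rewrite /tau' /=; lia.
Qed.


Record cyc (F : nat -> RW) (N : nat) (z' : W) : Prop := Cyc {
  c4 : 4 <= N;
  cval : forall t, validv (F t);
  ctyp : forall t, tauRv (F t) = n - 1 \/ tauRv (F t) = n;
  cz : forall t, incRv (F t) (Old z');
  cedge : forall t, incRv (F t) (F t.+1);
  cinj : forall s t, s < t < s + N -> F s <> F t;
  cper : forall t, F (t + N) = F t }.

Section Cyc.
Variables (F : nat -> RW) (N : nat) (z' : W).
Hypothesis C : cyc F N z'.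

Lemma cprev t : incRv (F t) (F (t + N - 1)).
Proof.
have ? := c4 C; have := cedge C (t + N - 1).
have -> : (t + N - 1).+1 = t + N by lia.
rewrite (cper C); exact: incR_sym.
Qed.

Lemma cne s t : s < t < s + N -> F s = F t -> False.
Proof. by move=> h e; apply: (cinj C h). Qed.

Lemma noAtt t i a : F t <> Att i a.
Proof.
have ? := c4 C; move=> e.
have h1 : F t.+1 = PNew i.
  apply: (nbA (a := a) (cval C _) (ctyp C _)); first by rewrite -e; exact: cedge C t.
  by move=> e2; apply: (cne (s:=t) (t:=t.+1)); [lia|congruence].
have h2 : F (t + N - 1) = PNew i.
  apply: (nbA (a := a) (cval C _) (ctyp C _)); first by rewrite -e; exact: cprev.
  by move=> e2; apply: (cne (s:=t) (t:=t + N - 1)); [lia|congruence].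
by apply: (cne (s:=t.+1) (t:=t + N - 1)); [lia|congruence].
Qed.

Lemma cnb j i : F j = PNew i ->
  (F j.+1 = rvv i.-1 /\ F (j + N - 1) = rvv i.+1) \/
  (F j.+1 = rvv i.+1 /\ F (j + N - 1) = rvv i.-1).
Proof.
have ? := c4 C; move=> e.
have hi : al < i < be by apply/isNewE; have := cval C j; rewrite e.
have a1 : F j.+1 = rvv i.-1 \/ F j.+1 = rvv i.+1.
  have i1 : incRv (PNew i) (F j.+1) by rewrite -e; exact: cedge C j.
  have n1 : F j.+1 <> PNew i by move=> e2; apply: (cne (s:=j) (t:=j.+1)); [lia|congruence].
  case: (nbP hi (cval C _) (ctyp C _) i1 n1) => [e2|[e2|[a e2]]]; [by left|by right|by case: (noAtt e2)].
have a2 : F (j + N - 1) = rvv i.-1 \/ F (j + N - 1) = rvv i.+1.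
  have i1 : incRv (PNew i) (F (j + N - 1)) by rewrite -e; exact: cprev.
  have n1 : F (j + N - 1) <> PNew i by move=> e2; apply: (cne (s:=j) (t:=j + N - 1)); [lia|congruence].
  case: (nbP hi (cval C _) (ctyp C _) i1 n1) => [e2|[e2|[a e2]]]; [by left|by right|by case: (noAtt e2)].
have ne : F j.+1 <> F (j + N - 1) by apply: (cinj C); lia.
case: a1 => e1; case: a2 => e2; try (by case: ne; rewrite e1 e2); tauto.
Qed.

Lemma fwd j i : F j = PNew i -> F j.+1 = rvv i.+1 ->
  forall s, i + s <= be -> F (j + s) = rvv (i + s).
Proof.
have ? := c4 C; move=> e e1.
have hi : al < i < be by apply/isNewE; have := cval C j; rewrite e.
have claim : forall s, i + s < be -> F (j + s) = rvv (i + s) /\ F (j + s).+1 = rvv (i + s).+1.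
  elim=> [|s IH] h.
    by rewrite !addn0 e rv_new.
  have [e2 e3] := IH ltac:(lia).
  have hk : al < i + s.+1 < be by lia.
  have eN : F (j + s.+1) = PNew (i + s.+1) by rewrite addnS e3 -addnS rv_new.
  case: (cnb eN) => -[a b].
    exfalso; apply: (cne (s := j + s) (t := (j + s.+1).+1)); first lia.
    by rewrite a e2; congr rvv; lia.
  by split; [rewrite eN rv_new | exact: a].
move=> s hs; case: (ltnP (i + s) be) => h; first by case: (claim s h).
case: s hs h => [|s] hs h; first by case/andP: hi; lia.
have [_ ] := claim s ltac:(lia).
by rewrite addnS [i + s.+1]addnS.
Qed.

End Cyc.


Lemma mod_ne N s t : s < t < s + N -> s %% N <> t %% N.
Proof.
move=> h e; have : (s + (t - s) == s + 0 %[mod N]).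
  by rewrite addn0 subnKC; [rewrite e | lia].
rewrite eqn_modDl mod0n modn_small; [|lia]; move/eqP; lia.
Qed.

Lemma modS N t : 0 < N -> t.+1 %% N = if (t %% N).+1 == N then 0 else (t %% N).+1.
Proof.
move=> N0; rewrite -addn1 -modnDml addn1.
case: eqP => [->|ne]; first exact: modnn.
apply: modn_small; have := ltn_pmod t N0; lia.
Qed.

Lemma crev F N z' K : cyc F N z' -> N <= K -> cyc (fun t => F (K - t %% N)) N z'.
Proof.
move=> C NK; have ? := c4 C; have N0 : 0 < N by lia.
split=> //.
- by move=> t; apply: (cval C).
- by move=> t; apply: (ctyp C).
- by move=> t; apply: (cz C).
- move=> t; rewrite (modS t N0); have := ltn_pmod t N0.
  case: eqP => [e|ne] h.
    have -> : K - t %% N = (K - N).+1 by lia.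
    have -> : K - 0 = (K - N) + N by lia.
    rewrite (cper C); apply: incR_sym; exact: (cedge C).
  have -> : K - t %% N = (K - (t %% N).+1).+1 by lia.
  apply: incR_sym; exact: (cedge C).
- move=> s t h e; have := mod_ne h => ne.
  have := ltn_pmod s N0; have := ltn_pmod t N0 => h1 h2.
  case: (ltnP (K - s %% N) (K - t %% N)) => h3.
    by apply: (cinj C (s := K - s %% N) (t := K - t %% N)) => //; lia.
  apply: (cinj C (s := K - t %% N) (t := K - s %% N)) => //; lia.
- by move=> t; rewrite modnDr.
Qed.


Lemma caseA F N z' (C : cyc F N z') t1 :
  F t1 = PNew al.+1 -> F t1.+1 = rvv al.+2 -> F (t1 + N - 1) = rvv al ->
  exists q, forall s, s <= be - al -> F (q + s) = rvv (al + s).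
Proof.
move=> e1 e2 e3; have ? := c4 C; exists (t1 + N - 1) => -[|s] hs.
  by rewrite !addn0.
have -> : t1 + N - 1 + s.+1 = (t1 + s) + N by lia.
rewrite (cper C) (fwd C e1 e2); [congr rvv; lia|lia].
Qed.

Lemma seg_exists F N z' (C : cyc F N z') t0 : (forall w, F t0 <> Old w) ->
  exists G q, cyc G N z' /\ forall s, s <= be - al -> G (q + s) = rvv (al + s).
Proof.
have ? := c4 C; move=> nO.
have desc : forall d t, F t = PNew (al.+1 + d) -> exists t', F t' = PNew al.+1.
  elim=> [|d IH] t e; first by exists t; rewrite addn0 in e.
  have hi : al < al.+1 + d.+1 < be by apply/isNewE; have := cval C t; rewrite e.
  have er : rvv (al.+1 + d.+1).-1 = PNew (al.+1 + d) by rewrite addnS /= rv_new //; lia.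
  case: (cnb C e) => -[a b]; [apply: (IH t.+1) | apply: (IH (t + N - 1))]; by rewrite ?a ?b.
have [t1 e1] : exists t1, F t1 = PNew al.+1.
  case E: (F t0) nO => [w|i|i a] nO; first by case: (nO w).
    have hi : al < i < be by apply/isNewE; have := cval C t0; rewrite E.
    apply: (desc (i - al.+1) t0); rewrite E; congr PNew; lia.
  by case: (noAtt C E).
have ea : (al.+1).-1 = al by [].
case: (cnb C e1); rewrite ea => -[a b].
  pose G t := F (t1 + N - t %% N).
  have CG : cyc G N z' by apply: (crev C); lia.
  have g0 : G 0 = PNew al.+1 by rewrite /G mod0n subn0 (cper C) e1.
  have g1 : G 1 = rvv al.+2 by rewrite /G modn_small; [rewrite b|lia].
  have gN : G (0 + N - 1) = rvv al.
    by rewrite /G add0n modn_small; [|lia]; have -> : t1 + N - (N - 1) = t1.+1 by lia.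
  have [q hq] := caseA CG g0 g1 gN.
  by exists G, q.
by have [q hq] := caseA C e1 a b; exists F, q.
Qed.


Local Notation resz := (@res n W tau inc z).

Lemma walk_false L (h : nat -> W) : h 0 = ox -> h L = oy -> 0 < L ->
  L + (be - al) <= 2 * m - 2 ->
  (forall u, u < L -> inc (h u) (h u.+1) /\ h u <> h u.+1) ->
  (forall u, u <= L -> resz (h u)) -> False.
Proof.
have ? := n3; have ? := m4.
move=> h0 hL L0 hLb he hr.
have ha : h al = x.
  move: h0; rewrite /al /ox; case: (tau x =P n) => ex h0 //.
  have [t1e _ _ uni] := Hch1 ex.
  have [i01 n01] := he 0 L0; rewrite h0 in i01 n01.
  have [[t1|t1] _] := hr 1 L0.
    by case: n01; apply/inc_same => //; rewrite t1e t1.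
  exact: uni.
have [b0 [eb0 hb]] : exists b0, b0 + (tau y == n) = L /\ h b0 = y.
  case: (tau y =P n) => ey; last first.
    by exists L; split; [rewrite addn0 | move: hL; rewrite /oy; case: eqP].
  have hL' : h L = xm2e by move: hL; rewrite /oy ey eqxx.
  exists L.-1; split; first by rewrite addn1; lia.
  have [t1e _ _ uni] := Hch2 ey.
  have [i01 n01] := he L.-1 ltac:(lia); rewrite prednK // hL' in i01 n01.
  have [[t1|t1] _] := hr L.-1 ltac:(lia).
    by case: n01; apply/inc_same => //; rewrite t1e t1.
  by apply: uni => //; apply: inc_sym.
have Ebe : be + (tau y == n) = m - 1 by rewrite /be; case: eqP => _ /=; lia.
have al1 : al <= 1 by rewrite /al; case: eqP.
have ab : al <= b0.
  case: (leqP al b0) => // hab; exfalso.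
  move: h0 hL hab eb0; rewrite /al /ox /oy.
  case: (tau x =P n) => ex; case: (tau y =P n) => ey /= h0 hL hab eb0; try lia.
  have L1 : L = 1 by lia.
  rewrite L1 in hL; have [i01 n01] := he 0 L0; rewrite h0 hL in i01 n01.
  have [t1 _ _ _] := Hch1 ex; have [t2 _ _ _] := Hch2 ey.
  by case: n01; apply/inc_same => //; rewrite t1 t2.
apply: (Hdist (l := b0 - al)); first lia.
exists (fun u => h (al + u)); split; first by rewrite addn0.
split; first by rewrite subnKC.
split; first by move=> u hu; apply: hr; lia.
by move=> u hu; rewrite addnS; apply: (he _ _).1; lia.
Qed.


Lemma path01 : x <> y /\ ~ inc x y.
Proof.
have rx : resz x by split.
have ry : resz y by split.
split=> [e|e].
  apply: (Hdist (l := 0)) => //.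
  exists (fun _ => x).
  split=> //; split=> //; split=> [i _|i //]; exact: rx.
apply: (Hdist (l := 1)); first by have := m4; lia.
exists (fun u => if u == 0 then x else y).
split=> //; split=> //; split=> [[|[|i]] //|[|i] //].
Qed.

Lemma ox_ne_oy : ox <> oy.
Proof.
have [nxy nixy] := path01.
rewrite /ox /oy; case: (tau x =P n) => ex; case: (tau y =P n) => ey e.
- have [_ i1 _ u1] := Hch1 ex; have [_ i2 _ _] := Hch2 ey.
  by apply: nxy; apply: esym; apply: u1; rewrite ?e.
- have [_ i1 _ _] := Hch1 ex; by apply: nixy; apply: inc_sym; rewrite -e.
- have [_ i2 _ _] := Hch2 ey; by apply: nixy; rewrite e.
- by apply: nxy.
Qed.

Lemma embedded w : tau w = n - 2 -> exists s, emb s = w.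
Proof.
have ? := n3; move=> tw; apply: NNPP => ne.
by case: (HpV (w := w)) => [v ev|e|e]; [apply: ne; exists v| |]; [exact: ev|lia|lia].
Qed.

Lemma z_eq z' : tau z' = n - 2 -> inc ox z' -> inc oy z' -> z' = z.
Proof.
have ? := n3; have ? := be_m; have ? := al_be.
move=> tz' i1 i2.
have [s1 iz1 pr1] := Hch3 (i := al) ltac:(lia) ptyp_al.
have [s2 iz2 pr2] := Hch3 (i := be) ltac:(lia) ptyp_be.
have [_ p1] := pr1 _ rv_al; have [_ p2] := pr2 _ rv_be.
have tr : 1 <= tau z' <= n - 2 by apply/andP; split; lia.
have j1 : inc (emb (pc al)) z' by rewrite -p1.
have j2 : inc (emb (pc be)) z' by rewrite -p2.
have [s es] := embedded tz; have [s' es'] := embedded tz'.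
rewrite -es -es'; rewrite -es in iz1 iz2; rewrite -es' in j1 j2.
have ne : pc al <> pc be by move=> e; have := Hch4 (i := al) (j := be) ltac:(lia) ltac:(lia) ptyp_al ptyp_be e; lia.
have ss : sdim s = n - 2 by rewrite -Hind_tau es.
have ss' : sdim s' = n - 2 by rewrite -Hind_tau es'.
have sub a b : sdim a = n - 2 -> sdim b = n - 1 -> inc (emb b) (emb a) -> forall v, sset a v -> sset b v.
  move=> sa sb /Hind_inc h; apply: (sinc_lt Rfield); first lia.
  by case: h; [right|left].
congr emb; apply: esym; apply: (hyp_inter Rfield n3 s1 s2 ss ss' _ _ _ _ ne); apply: sub => //.
Qed.

Lemma seg_false F N z' (C : cyc F N z') q : tau z' = n - 2 -> N <= 2 * m - 2 ->
  (forall s, s <= be - al -> F (q + s) = rvv (al + s)) -> False.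
Proof.
have ? := n3; have ? := be_m; have ? := al_be; have ? := c4 C.
move=> tz' Nm hs.
have DN : be - al < N.
  rewrite ltnNge; apply/negP => ND.
  have e1 := hs N ND; rewrite (cper C) -[q]addn0 hs // addn0 rv_al in e1.
  case: (ltnP (al + N) be) => h.
    by rewrite rv_new in e1 => //; lia.
  have eb : al + N = be by lia.
  by rewrite eb rv_be in e1; case: e1; apply: ox_ne_oy.
set D := be - al.
have old : forall u, u <= N - D -> exists w, F (q + D + u) = Old w.
  move=> u hu; case E: (F (q + D + u)) => [w|i|i a]; first by exists w.
    have hi : al < i < be by apply/isNewE; have := cval C (q + D + u); rewrite E.
    have e2 := hs (i - al) ltac:(lia).
    have ei : al + (i - al) = i by lia.
    rewrite ei in e2.
    rewrite rv_new // in e2.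
    by exfalso; apply: (cne C (s := q + (i - al)) (t := q + D + u)); [lia|rewrite e2 E].
  by case: (noAtt C E).
pose g u := if F (q + D + u) is Old w then w else z.
have hg : forall u, u <= N - D -> F (q + D + u) = Old (g u).
  by move=> u hu; rewrite /g; case: (old u hu) => w ->.
set L := N - D.
have g0 : g 0 = oy.
  have := hg 0 (leq0n _); rewrite addn0 hs // /D subnKC ?rv_be; [by case|lia].
have gL : g L = ox.
  have := hg L (leqnn _); rewrite -addnA /L subnKC; [|lia].
  by rewrite (cper C) -[q]addn0 hs // addn0 rv_al; case.
have rg : forall u, u <= L -> tau (g u) = n - 1 \/ tau (g u) = n /\ True.
  by move=> u hu; have := ctyp C (q + D + u); rewrite hg //= => -[]; tauto.
have rz : forall u, u <= L -> inc (g u) z'.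
  by move=> u hu; have := cz C (q + D + u); rewrite hg // incOO.
have eg : forall u, u < L -> inc (g u) (g u.+1) /\ g u <> g u.+1.
  move=> u hu; split.
    have := cedge C (q + D + u); rewrite -addnS (hg u) ?(hg u.+1) ?incOO //; lia.
  move=> e; apply: (cne C (s := q + D + u) (t := q + D + u.+1)); first lia.
  by rewrite (hg u) ?(hg u.+1) ?e //; lia.
have ez : z' = z by apply: z_eq => //; [rewrite -gL | rewrite -g0]; apply: rz; lia.
subst z'.
apply: (walk_false (L := L) (h := fun u => g (L - u))).
- by rewrite subn0.
- by rewrite subnn.
- rewrite /L; lia.
- rewrite /L /D; lia.
- move=> u hu; have [i1 n1] := eg (L - u.+1) ltac:(lia).
  have ei : (L - u.+1).+1 = L - u by lia.
  rewrite ei in i1 n1.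
  by split; [apply: inc_sym | move=> e; apply: n1].
- move=> u hu; split; last exact: rz (leq_subr _ _).
  by case: (rg (L - u) (leq_subr _ _)) => [|[]]; tauto.
Qed.


Lemma propP2 : @propP n W2 tau2 inc2 m.
Proof.
have ? := n3; have ? := m4.
move=> z2 tz2 k hk [f [finj [fres fedge]]].
have [z' ez] := low_old (r := z2) ltac:(lia).
have tz' : tau z' = n - 2 by move: tz2; rewrite /tau' ez.
set N := 2 * k.
have N0 : 0 < N by rewrite /N; lia.
pose F t := proj1_sig (f (t %% N)).
have C : cyc F N z'.
  split.
  - rewrite /N; lia.
  - by move=> t; exact: proj2_sig (f _).
  - by move=> t; have [h _] := fres (t %% N) (ltn_pmod _ N0); exact: h.
  - by move=> t; have [_ h] := fres (t %% N) (ltn_pmod _ N0); rewrite /inc' ez in h.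
  - move=> t; have h := fedge (t %% N) (ltn_pmod _ N0); rewrite /F.
    have -> : t.+1 %% N = (t %% N).+1 %% N by rewrite -addn1 -modnDml addn1.
    exact: h.
  - move=> s t h e; apply: (mod_ne h); apply: finj; try exact: ltn_pmod.
    exact: sigE.
  - by move=> t; rewrite /F modnDr.
case: (classic (exists t, forall w, F t <> Old w)) => [[t0 h0]|hall].
  have [G [q [CG hG]]] := seg_exists C h0.
  by apply: (seg_false CG tz' _ hG); rewrite /N; lia.
have hold : forall t, exists w, F t = Old w.
  move=> t; apply: NNPP => ne; apply: hall; exists t => w e; apply: ne; by exists w.
pose g t := if F t is Old w then w else z.
have hg : forall t, F t = Old (g t) by move=> t; rewrite /g; case: (hold t) => w ->.
have Ff : forall i, i < N -> F i = proj1_sig (f i) by move=> i hi; rewrite /F modn_small.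
apply: (HpP tz' hk); exists g; split.
  move=> i j hi hj e; apply: finj => //; apply: sigE.
  by rewrite -!Ff // !hg e.
split.
  move=> i hi; have [h1 h2] := fres i hi.
  rewrite /tau' /inc' ez -Ff // hg /= in h1 h2.
  by split=> //; move/incOO: h2.
move=> i hi; have h := fedge i hi.
rewrite /inc' -Ff // -(Ff (i.+1 %% N)) ?ltn_pmod // !hg in h.
exact/incOO.
Qed.


Lemma props2 : @props R n W2 tau2 inc2 emb2 m.
Proof. split; [exact: propF2|split; [exact: propI2|split; [exact: propV2|split; [exact: propP2|split; [exact: propH2|exact: propC2]]]]]. Qed.

End Main.

Theorem mainTheorem5 (R : unitRingType) (n m : nat)
  (W : Type) (tau : W -> nat) (inc : W -> W -> Prop) (emb : Subsp R n -> W)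
  (z x y x1e xm2e : W) (pc : nat -> Subsp R n) :
  3 <= n -> 4 <= m ->
  (* R is a countably infinite skew field *)
  (forall a : R, (a != 0)%R -> a \is a GRing.unit) ->
  (exists f : nat -> R, injective f) -> (exists g : R -> nat, injective g) ->
  (* Delta = (W,tau,inc) is a geometry over {1..n} containing Delta_0 as an
     induced subgeometry and satisfying (F),(I),(V),(P),(H),(C) *)
  @is_geometry n W tau inc -> @induced_sub R n W tau inc emb ->
  @props R n W tau inc emb m ->
  (* z, x, y *)
  tau z = n - 2 ->
  (tau x = n - 1 \/ tau x = n) -> (tau y = n - 1 \/ tau y = n) ->
  inc x z -> inc y z ->
  (if odd m then tau x = tau y else tau x <> tau y) ->
  @dist_ge n W tau inc z m.+1 x y ->
  (* admissible choices for the construction *)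
  @choices_ok R n m W tau inc emb z x y x1e xm2e pc ->
  @props R n (@W' R n m W tau x y pc)
    (@tau' R n m W tau x y pc)
    (@inc' R n m W tau inc emb x y x1e xm2e pc)
    (@emb' R n m W tau emb x y pc) m.
Proof.
move=> n3 m4 Rf _ _ Hgeo Hind Hprops tz tx ty xz yz Hpar Hdist Hch.
exact: (props2 n3 m4 Rf Hgeo Hind Hprops tz tx ty xz yz Hpar Hdist Hch).
Qed.
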